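(* Let $\Delta\ge 1$ and $s\ge 1$ be integers, $r=s\Delta$, and let $\sigma=(\Delta,\Delta,\ldots,\Delta)$ be the partition of $r$ into $s$ parts all equal to $\Delta$. Let $n\ge (r+1)^2$ and $q\ge r\Delta$, and let $H=H(n,r,q\mid\sigma)$. Then \[\nu(H)=\left\lfloor \frac{n\,(q-(q \bmod \Delta))}{r}\right\rfloor,\] where $q\bmod\Delta$ denotes the remainder of $q$ upon division by $\Delta$.
   Context: A $\sigma$-hypergraph $H=H(n,r,q\mid\sigma)$, for a partition $\sigma=(a_1,\ldots,a_s)$ of $r$, is the $r$-uniform hypergraph whose vertex set is the disjoint union of $n$ classes $V_1,\ldots,V_n$, each of size $q$; an $r$-subset $K$ of vertices is an edge iff the multiset of non-zero values $|K\cap V_i|$ ($1\le i\le n$) equals $\sigma$. A matching is a set of pairwise vertex-disjoint edges; $\nu(H)$ is the maximum size of a matching in $H$. *)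

(* Defs.v *)
From mathcomp Require Import all_boot all_order.
Set Implicit Arguments. Unset Strict Implicit. Unset Printing Implicit Defensive.

(* Vertices of H(n,r,q|sigma): pairs (i, j) with i : 'I_n the class index and
   j : 'I_q the position inside the class V_i (so |V_i| = q). *)
Definition hvert (n q : nat) := ('I_n * 'I_q)%type.

Definition class_count n q (K : {set hvert n q}) (i : 'I_n) : nat :=
  #|[set v in K | v.1 == i]|.

Definition sigma_edge n r q (sigma : seq nat) (K : {set hvert n q}) : bool :=
  (#|K| == r) &&
  perm_eq [seq c <- [seq class_count K i | i <- enum 'I_n] | 0 < c] sigma.

Definition is_matching n r q (sigma : seq nat) (M : {set {set hvert n q}}) : bool :=
  [forall K in M, sigma_edge r sigma K] &&
  [forall K in M, forall L in M, (K != L) ==> [disjoint K & L]].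

Definition nu n r q (sigma : seq nat) : nat :=
  \max_(M : {set {set hvert n q}} | is_matching r sigma M) #|M|.

(* Main.v *)
Require Import Defs.
From mathcomp Require Import all_boot all_order.
From mathcomp Require Import zify.

Lemma divmod_uniq (d a a' x x' : nat) : x < d -> x' < d ->
  a * d + x = a' * d + x' -> a = a' /\ x = x'.
Proof.
move=> hx hx' e.
have d0 : 0 < d by case: d hx {hx'} e.
have := congr1 (fun z => z %/ d) e; have := congr1 (fun z => z %% d) e.
rewrite /= !modnMDl !divnMDl // !modn_small // !divn_small // !addn0.
by [].
Qed.

Section Constr.
Variables (n1 q1 s D : nat).
Local Notation n := n1.+1.
Local Notation q := q1.+1.

Definition gv k (x : 'I_s * 'I_D) : hvert n q :=
  (inord ((k*s + x.1) %% n), inord (D * ((k*s + x.1) %/ n) + x.2)).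

Definition Ed k := [set gv k x | x in [set: 'I_s * 'I_D]].

Lemma gv_inj k k' x x' : D * (q %/ D) <= q -> k.+1 * s <= n * (q %/ D) -> k'.+1 * s <= n * (q %/ D) ->
  gv k x = gv k' x' -> k = k' /\ x = x'.
Proof.
case: x x' => [t d] [t' d'] Dm hk hk' [] /= e1 e2.
set m := q %/ D in Dm hk hk'.
have bnd : forall kk (tt : 'I_s) (dd : 'I_D), kk.+1 * s <= n * m ->
    D * ((kk*s + tt) %/ n) + dd < q.
  move=> kk tt dd h.
  have : (kk*s + tt) %/ n < m by rewrite ltn_divLR //; have := ltn_ord tt; nia.
  have := ltn_ord dd; nia.
move: e1 e2 => /(congr1 val) e1 /(congr1 val) e2; move: e1 e2; rewrite /= !inordK ?ltn_pmod ?bnd // => e1 e2.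
have [e3 e4] : (k * s + t) %/ n = (k' * s + t') %/ n /\ (d : nat) = d'.
  apply: (@divmod_uniq D) => //; by rewrite ![_ * D]mulnC.
have e5 : k * s + t = k' * s + t' by rewrite (divn_eq (k*s+t) n) (divn_eq (k'*s+t') n) e1 e3.
have [e6 e7] := @divmod_uniq s k k' t t' (ltn_ord t) (ltn_ord t') e5.
split=> //; congr pair; exact: val_inj.
Qed.

Definition pos k (t : 'I_s) : 'I_n := inord ((k*s + t) %% n).

Lemma pos_inj k : s <= n -> injective (pos k).
Proof.
move=> sn t t' /(congr1 val); rewrite /= !inordK ?ltn_pmod // => e.
apply: val_inj => /=.
have : (t : nat) == t' %[mod n] by rewrite -(eqn_modDl (k*s)) e.
rewrite !modn_small //; [by move/eqP | exact: leq_trans (ltn_ord t') sn |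
  exact: leq_trans (ltn_ord t) sn].
Qed.

Lemma Ed_card k : D * (q %/ D) <= q -> k.+1 * s <= n * (q %/ D) -> #|Ed k| = s * D.
Proof.
move=> Dm hk; rewrite card_imset ?cardsT ?card_prod ?card_ord //.
by move=> x x' e; case: (@gv_inj k k x x' Dm hk hk e).
Qed.

Lemma Ed_count k i : D * (q %/ D) <= q -> k.+1 * s <= n * (q %/ D) -> s <= n ->
  class_count (Ed k) i = (i \in pos k @: setT) * D.
Proof.
move=> Dm hk sn; rewrite /class_count.
have -> : [set v in Ed k | v.1 == i] = gv k @: [set x | pos k x.1 == i].
  apply/setP => v; rewrite !inE; apply/andP/imsetP.
    by case=> /imsetP [x _ ->] e; exists x => //; rewrite inE.
  by case=> x; rewrite inE => e ->; split => //; apply: imset_f.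
rewrite card_imset; last by move=> x x' e; case: (@gv_inj k k x x' Dm hk hk e).
have -> : [set x | pos k x.1 == i] = setX [set t | pos k t == i] [set: 'I_D].
  by apply/setP => x; rewrite !inE andbT.
rewrite cardsX cardsT card_ord; congr (_ * _).
case: (boolP (i \in _)) => [/imsetP [t _ ->] | ni].
  rewrite (_ : [set t0 | _] = [set t]) ?cards1 //; apply/setP => t'; rewrite !inE.
  by apply/eqP/eqP => [/pos_inj -> | ->].
apply/eqP; rewrite cards_eq0; apply/eqP/setP => t; rewrite !inE.
by apply: contraNF ni => /eqP <-; apply: imset_f.
Qed.

Lemma Ed_edge k : 0 < D -> D * (q %/ D) <= q -> k.+1 * s <= n * (q %/ D) -> s <= n ->
  sigma_edge (s * D) (nseq s D) (Ed k).
Proof.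
move=> D0 Dm hk sn; apply/andP; split; first by rewrite Ed_card.
have -> : [seq class_count (Ed k) i | i <- enum 'I_n] =
   [seq (i \in pos k @: setT) * D | i <- enum 'I_n].
  by apply: eq_map => i; rewrite Ed_count.
rewrite filter_map.
set l := [seq _ | _ <- _].
have -> : l = nseq s D.
  have al : all (pred1 D) l.
    apply/allP => x /mapP [i]; rewrite mem_filter /= => /andP [h _] ->.
    by move: h; case: (i \in _); rewrite ?mul1n ?mul0n.
  rewrite (all_pred1P _ _ al); congr nseq.
  rewrite size_map.
  have -> : [seq i <- enum 'I_n | preim (fun i => (i \in pos k @: setT) * D) [eta leq 1] i]
    = [seq i <- enum 'I_n | i \in pos k @: setT].
    by apply: eq_filter => i /=; case: (i \in _); rewrite ?mul1n ?mul0n.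
  have -> : size [seq i <- enum 'I_n | i \in pos k @: setT] = #|pos k @: setT|.
    by rewrite cardE enumT /enum_mem -enumT.
  by rewrite card_imset ?cardsT ?card_ord //; apply: pos_inj.
exact: perm_refl.
Qed.
End Constr.

Lemma upper n q s D (M : {set {set hvert n q}}) : 0 < D -> 0 < s ->
  is_matching (s * D) (nseq s D) M -> #|M| * (s * D) <= n * ((q %/ D) * D).
Proof.
move=> D0 s0 /andP [/forallP hE /forallP hD].
have hE' : forall K, K \in M -> sigma_edge (s * D) (nseq s D) K.
  by move=> K KM; have := hE K; rewrite KM.
have cK : forall K, K \in M -> #|K| = s * D.
  by move=> K /hE' /andP [/eqP -> _].
have cc : forall K i, K \in M -> D %| class_count K i.
  move=> K i /hE' /andP [_ pe].
  case: (posnP (class_count K i)) => [-> | pos]; first exact: dvdn0.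
  have : class_count K i \in nseq s D.
    rewrite -(perm_mem pe) mem_filter pos /=; apply: map_f; exact: mem_enum.
  by rewrite mem_nseq => /andP [_ /eqP ->].
have sumK : forall K : {set hvert n q}, #|K| = \sum_(i < n) class_count K i.
  move=> K; rewrite -sum1_card (partition_big (fun v : hvert n q => v.1) predT) //=.
  apply: eq_bigr => i _; rewrite /class_count -sum1_card.
  by apply: eq_bigl => v; rewrite !inE.
have trM : trivIset M.
  apply/trivIsetP => K L KM LM KL; have := hD K; rewrite KM => /forallP /(_ L).
  by rewrite LM KL.
have per : forall i : 'I_n, \sum_(K in M) class_count K i <= (q %/ D) * D.
  move=> i.
  have e : \sum_(K in M) class_count K i =
      \sum_(v in cover M | v.1 == i) 1.
    symmetry; rewrite big_trivIset_cond //; apply: eq_bigr => K _.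
    by rewrite /class_count -sum1_card; apply: eq_bigl => v; rewrite !inE.
  have hq : \sum_(K in M) class_count K i <= q.
    rewrite e sum1_card.
    have eq : #|setX [set i] [set: 'I_q]| = q by rewrite cardsX cards1 cardsT card_ord mul1n.
    rewrite -[X in _ <= X]eq.
    apply: subset_leq_card; apply/subsetP => v; rewrite !inE.
    by case/andP => _ /eqP ->; rewrite eqxx.
  have hd : D %| \sum_(K in M) class_count K i.
    by apply: dvdn_sum => K KM; apply: cc.
  rewrite -(divnK hd) leq_mul2r; apply/orP; right; exact: leq_div2r.
have -> : #|M| * (s * D) = \sum_(K in M) #|K|.
  by rewrite -sum_nat_const; apply: eq_bigr => K KM; rewrite cK.
rewrite (eq_bigr (fun K => \sum_(i < n) class_count K i)); last by move=> K _; apply: sumK.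
rewrite exchange_big /=.
apply: (@leq_trans (\sum_(i < n) ((q %/ D) * D))).
  by apply: leq_sum => i _; apply: per.
by rewrite sum_nat_const card_ord.
Qed.

Theorem theorem3p7 (Delta s n q : nat) :
  1 <= Delta -> 1 <= s ->
  (s * Delta).+1 ^ 2 <= n ->
  (s * Delta) * Delta <= q ->
  nu n (s * Delta) q (nseq s Delta) =
    (n * (q - q %% Delta)) %/ (s * Delta).
Proof.
move=> D1 s1 hn hq.
have eqm : q - q %% Delta = q %/ Delta * Delta by rewrite {1}(divn_eq q Delta) addnK.
rewrite eqm mulnA divnMr //.
have sn : s <= n by nia.
case: n hn sn => [|n1] hn sn; first by nia.
case: q hq eqm => [|q1] hq eqm; first by nia.
have Dm : Delta * (q1.+1 %/ Delta) <= q1.+1 by rewrite mulnC leq_divM.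
apply/eqP; rewrite eqn_leq; apply/andP; split.
  apply/bigmax_leqP => M hM; rewrite leq_divRL //.
  have := @upper _ _ s Delta M D1 s1 hM.
  by rewrite !mulnA leq_pmul2r.
set N := n1.+1 * (q1.+1 %/ Delta) %/ s.
have hk : forall k : 'I_N, k.+1 * s <= n1.+1 * (q1.+1 %/ Delta).
  by move=> k; rewrite -leq_divRL //; exact: ltn_ord.
pose M := [set Ed n1 q1 s Delta (val k) | k : 'I_N].
have x0 : 'I_s * 'I_Delta := (Ordinal s1, Ordinal D1).
have EE : forall k k' : 'I_N, forall x x', gv n1 q1 s Delta k x = gv n1 q1 s Delta k' x' -> k = k'.
  move=> k k' x x' e; apply: val_inj.
  by case: (@gv_inj n1 q1 s Delta k k' x x' Dm (hk k) (hk k') e).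
have cM : #|M| = N.
  rewrite card_imset ?card_ord // => k k' e.
  have : gv n1 q1 s Delta k x0 \in Ed n1 q1 s Delta k' by rewrite -e; apply: imset_f.
  by case/imsetP => x' _ /EE.
rewrite -[X in X <= _]cM.
apply: (@leq_bigmax_cond _ (fun M => is_matching (s * Delta) (nseq s Delta) M) (fun M => #|M|) M).
apply/andP; split.
  apply/forallP => K; apply/implyP => /imsetP [k _ ->].
  exact: (@Ed_edge n1 q1 s Delta k D1 Dm (hk k) sn).
apply/forallP => K; apply/implyP => /imsetP [k _ ->].
apply/forallP => L; apply/implyP => /imsetP [k' _ ->].
apply/implyP => ne; rewrite -setI_eq0; apply/eqP/setP => v; rewrite !inE; apply/negbTE/negP => /andP [/imsetP [x _ ->] /imsetP [x' _ e]].
by move: ne; rewrite (EE _ _ _ _ e) eqxx.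
Qed.
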